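(* For every $n\ge 2$, there exists no matching mechanism that is resolute, symmetric (i.e. $G^*$-symmetric) and minimally optimal.
   Context: Fix $n\ge 2$, $W=\{1,\dots,n\}$ (women), $M=\{n+1,\dots,2n\}$ (men), $I=W\cup M$. Permutations compose right-to-left. A preference profile is a function $p$ on $I$ assigning to each $x\in W$ a linear order $p(x)$ on $M$ and to each $y\in M$ a linear order $p(y)$ on $W$; $\mathcal{P}$ is the set of preference profiles. For a linear order $R$ on a set $X$ and $a\in X$, $\mathrm{Rank}_R(a)=|\{b\in X: b\succeq_R a\}|$. A matching is a permutation $\mu$ of $I$ with $\mu(W)=M$, $\mu(M)=W$ and $\mu(\mu(z))=z$ for all $z\in I$; $\mathcal{M}$ is the set of matchings. $\mu$ is minimally optimal for $p$ if there is $z\in I$ with $\mathrm{Rank}_{p(z)}(\mu(z))<n$. Let $G^*=\{\varphi\in\mathrm{Sym}(I):\{\varphi(W),\varphi(M)\}=\{W,M\}\}$. For a linear order $R$ on $X\subseteq I$ and $\varphi\in\mathrm{Sym}(I)$, $\varphi R$ is the relation on $\varphi(X)$ with $(a,b)\in\varphi R$ iff $(\varphi^{-1}(a),\varphi^{-1}(b))\in R$. For $p\in\mathcal{P}$, $\varphi\in G^*$, $p^\varphi(z)=\varphi\,p(\varphi^{-1}(z))$. For a permutation $\mu$, $\mu^\varphi=\varphi\mu\varphi^{-1}$; $S^\varphi=\{\mu^\varphi:\mu\in S\}$. A matching mechanism is a correspondence $F$ from $\mathcal{P}$ to $\mathcal{M}$; it is resolute if $|F(p)|=1$ for all $p$;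 minimally optimal if every $\mu\in F(p)$ is minimally optimal for $p$, for all $p$; symmetric if $F(p^\varphi)=F(p)^\varphi$ for all $p\in\mathcal{P}$, $\varphi\in G^*$. *)

(* Defs.v *)
From mathcomp Require Import all_boot all_fingroup.
Set Implicit Arguments. Unset Strict Implicit. Unset Printing Implicit Defensive.

(* Agents: I = 'I_(n+n). Ordinal i (0-based) encodes agent i+1.
   Women W = {i | i < n} (agents 1..n), men M = {i | n <= i} (agents n+1..2n). *)
Section Matching.
Variable n : nat.

Definition agent := 'I_(n + n).

Definition isW (i : agent) : bool := i < n.
Definition Wset : {set agent} := [set i | isW i].
Definition Mset : {set agent} := [set i | ~~ isW i].

Definition other_side (x : agent) : {set agent} := if isW x then Mset else Wset.

(* A prefrel on agents; R (a, b) means a ⪰ b (a weakly preferred to b). *)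
Definition prefrel := {ffun agent * agent -> bool}.

Definition linear_order (X : {set agent}) (R : prefrel) : Prop :=
  [/\ forall a b, R (a, b) -> a \in X /\ b \in X,
      forall a, a \in X -> R (a, a),
      forall a b, R (a, b) -> R (b, a) -> a = b,
      forall a b c, R (a, b) -> R (b, c) -> R (a, c) &
      forall a b, a \in X -> b \in X -> R (a, b) \/ R (b, a)].

Definition profile := {ffun agent -> prefrel}.

Definition is_profile (p : profile) : Prop :=
  forall x, linear_order (other_side x) (p x).

Definition rank (X : {set agent}) (R : prefrel) (a : agent) : nat :=
  #|[set b in X | R (b, a)]|.

Definition is_matching (mu : {perm agent}) : Prop :=
  [/\ mu @: Wset = Mset, mu @: Mset = Wset & forall z, mu (mu z) = z].

Definition minimally_optimal_matching (p : profile) (mu : {perm agent}) : Prop :=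
  exists z : agent, rank (other_side z) (p z) (mu z) < n.

Definition in_Gstar (phi : {perm agent}) : Prop :=
  [set phi @: Wset; phi @: Mset] = [set Wset; Mset].

Definition act_rel (phi : {perm agent}) (R : prefrel) : prefrel :=
  [ffun ab : agent * agent => R ((phi^-1)%g ab.1, (phi^-1)%g ab.2)].

Definition act_profile (phi : {perm agent}) (p : profile) : profile :=
  [ffun z => act_rel phi (p ((phi^-1)%g z))].

(* mu^phi = phi o mu o phi^-1 (right-to-left composition).  In MathComp,
   (s * t) x = t (s x), so phi o mu o phi^-1 is phi^-1 * mu * phi. *)
Definition act_matching (phi mu : {perm agent}) : {perm agent} :=
  (phi^-1 * mu * phi)%g.

Definition mechanism (F : profile -> {set {perm agent}}) : Prop :=
  forall p, is_profile p -> forall mu, mu \in F p -> is_matching mu.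

Definition resolute (F : profile -> {set {perm agent}}) : Prop :=
  forall p, is_profile p -> #|F p| = 1.

Definition minimally_optimal (F : profile -> {set {perm agent}}) : Prop :=
  forall p, is_profile p -> forall mu, mu \in F p -> minimally_optimal_matching p mu.

Definition Gsymmetric (F : profile -> {set {perm agent}}) : Prop :=
  forall p phi, is_profile p -> in_Gstar phi ->
    F (act_profile phi p) = [set act_matching phi mu | mu in F p].

End Matching.

(* Main.v *)
Require Import Defs.
From mathcomp Require Import all_boot all_fingroup.
From mathcomp Require Import zify.
Set Implicit Arguments. Unset Strict Implicit. Unset Printing Implicit Defensive.

Definition posf n (z : agent n) : nat :=
  if (z : nat) < n then (z : nat).*2 else ((z : nat) - n).*2.+1.

Lemma posf_lt n (z : agent n) : posf z < n + n.
Proof. rewrite /posf -!muln2; have := ltn_ord z; case: ifP => h; lia. Qed.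

Definition posO n (z : agent n) : 'I_(n + n) := Ordinal (posf_lt z).

Lemma posO_inj n : injective (@posO n).
Proof.
move=> x y /(congr1 val) /=; rewrite /posf.
have := ltn_ord x; have := ltn_ord y.
case: ifP => hx; case: ifP => hy => h1 h2 e; apply: val_inj => /=.
- by move: e; rewrite -!muln2; lia.
- by move: (congr1 odd e); rewrite /= !odd_double.
- by move: (congr1 odd e); rewrite /= !odd_double.
- by move: e; rewrite -!muln2; lia.
Qed.

Definition Pp n : {perm agent n} := perm (@posO_inj n).
Definition Sp n : {perm agent n} := perm (@ordS_inj (n + n)).
Definition cyc n : {perm agent n} := (Pp n * Sp n * (Pp n)^-1)%g.
Definition q n (z : agent n) : nat := Pp n z.

Lemma q_cyc n (z : agent n) : q (cyc n z) = (q z).+1 %% (n + n).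
Proof. by rewrite /q /cyc !permM permKV /Sp permE. Qed.

Lemma q_inj n : injective (@q n).
Proof. by move=> x y h; apply: (perm_inj (s := Pp n)); apply: val_inj. Qed.

Lemma q_lt n (z : agent n) : q z < n + n.
Proof. exact: ltn_ord. Qed.

Lemma isW_q n (z : agent n) : isW z = ~~ odd (q z).
Proof.
rewrite /q /Pp permE /= /posf /isW; case: ifP => h.
  by rewrite odd_double.
by rewrite /= odd_double.
Qed.

Lemma odd_qc n (z : agent n) : odd (q (cyc n z)) = ~~ odd (q z).
Proof.
rewrite q_cyc; have := q_lt z; rewrite leq_eqVlt => /orP [/eqP e | h].
  rewrite e modnn /=.
  have := congr1 odd e; rewrite /= oddD addbb => ->; by [].
by rewrite modn_small.
Qed.

Lemma q_iter n k (x : agent n) : q (iter k (cyc n) x) = (q x + k) %% (n + n).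
Proof.
elim: k => [|k IH]; first by rewrite addn0 modn_small // q_lt.
rewrite iterS q_cyc IH -addn1 modnDml; congr (_ %% _); lia.
Qed.

Lemma in_other n (a z : agent n) :
  (a \in other_side z) = (odd (q a) != odd (q z)).
Proof.
rewrite /other_side /Mset /Wset; case: ifP => hz; rewrite inE isW_q;
move: hz; rewrite isW_q; by case: (odd (q a)); case: (odd (q z)).
Qed.

Definition key n (z a : agent n) : nat := (q a + (n + n - q z) + n.-1) %% (n + n).

Lemma key_lt n (z a : agent n) : key z a < n + n.
Proof. rewrite /key ltn_pmod //; have := q_lt z; lia. Qed.

Lemma key_inj n (z a b : agent n) : key z a = key z b -> a = b.
Proof.
rewrite /key -!addnA => /eqP; rewrite eqn_modDr !modn_small ?q_lt // => /eqP.
exact: q_inj.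
Qed.

Lemma keyc_arith N m x y : 0 < N -> x < N -> y < N ->
  ((x.+1 %% N) + (N - y.+1 %% N) + m) %% N = (x + (N - y) + m) %% N.
Proof.
move=> N0 hx hy.
have [ex|lx] := eqVneq x.+1 N; have [ey|ly] := eqVneq y.+1 N.
- rewrite ex modnn; congr (_ %% _); rewrite ey modnn; lia.
- rewrite ex modnn (modn_small (m := y.+1)); last lia.
  have -> : x + (N - y) + m = (0 + (N - y.+1) + m) + N by lia.
  by rewrite modnDr.
- rewrite ey modnn (modn_small (m := x.+1)); last lia.
  have -> : x.+1 + (N - 0) + m = (x + (N - y) + m) + N by lia.
  by rewrite modnDr.
- rewrite (modn_small (m := x.+1)) 1?(modn_small (m := y.+1)); try lia; congr (_ %% _); lia.
Qed.

Lemma key_cyc n (z a : agent n) : 0 < n ->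
  key (cyc n z) (cyc n a) = key z a.
Proof.
move=> n0; rewrite /key !q_cyc keyc_arith ?q_lt //; lia.
Qed.

Definition prof n : profile n :=
  [ffun z => [ffun ab : agent n * agent n =>
     [&& ab.1 \in other_side z, ab.2 \in other_side z & key z ab.1 <= key z ab.2]]].

Lemma prof_ok n : is_profile (prof n).
Proof.
move=> z; split.
- by move=> a b; rewrite !ffunE /= => /and3P [].
- by move=> a ha; rewrite !ffunE /= ha leqnn.
- move=> a b; rewrite !ffunE /= => /and3P [_ _ h1] /and3P [_ _ h2].
  by apply: (key_inj (z := z)); apply/eqP; rewrite eqn_leq h1 h2.
- move=> a b c; rewrite !ffunE /= => /and3P [-> _ h1] /and3P [_ -> h2].
  by rewrite (leq_trans h1 h2).
- move=> a b ha hb; rewrite !ffunE /= ha hb /=; exact/orP/leq_total.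
Qed.

Lemma prof_cyc n (z a b : agent n) : 0 < n ->
  prof n (cyc n z) (cyc n a, cyc n b) = prof n z (a, b).
Proof.
move=> n0; rewrite !ffunE /= !in_other !odd_qc !key_cyc //.
by case: (odd (q a)); case: (odd (q b)); case: (odd (q z)).
Qed.

Lemma prof_inv n : 0 < n -> act_profile (cyc n) (prof n) = prof n.
Proof.
move=> n0; apply/ffunP => z; rewrite ffunE; apply/ffunP => [[a b]].
rewrite ffunE /=.
rewrite -{2}(permKV (cyc n) z) -{2}(permKV (cyc n) a) -{2}(permKV (cyc n) b).
by rewrite prof_cyc.
Qed.

Lemma card_W n : #|Wset n| = n.
Proof.
have -> : Wset n = lshift n @: setT.
  apply/setP => i; rewrite inE; apply/idP/imsetP.
    move=> h; exists (Ordinal h) => //; exact: val_inj.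
  by case=> j _ ->; rewrite /isW /= ltn_ord.
by rewrite card_imset ?cardsT ?card_ord //; exact: lshift_inj.
Qed.

Lemma card_M n : #|Mset n| = n.
Proof.
have -> : Mset n = @rshift n n @: setT.
  apply/setP => i; rewrite inE; apply/idP/imsetP.
    rewrite /isW -leqNgt => h.
    have h2 : (i : nat) - n < n by have := ltn_ord i; lia.
    exists (Ordinal h2) => //; apply: val_inj => /=; lia.
  by case=> j _ ->; rewrite /isW /= -leqNgt leq_addr.
by rewrite card_imset ?cardsT ?card_ord //; exact: rshift_inj.
Qed.

Lemma cyc_WM n : cyc n @: Wset n = Mset n.
Proof.
apply/eqP; rewrite eqEcard card_imset; last exact: perm_inj.
rewrite card_W card_M leqnn andbT.
apply/subsetP => x /imsetP [y hy ->]; move: hy.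
by rewrite !inE !isW_q odd_qc negbK.
Qed.

Lemma cyc_MW n : cyc n @: Mset n = Wset n.
Proof.
apply/eqP; rewrite eqEcard card_imset; last exact: perm_inj.
rewrite card_W card_M leqnn andbT.
apply/subsetP => x /imsetP [y hy ->]; move: hy.
by rewrite !inE !isW_q odd_qc.
Qed.

Lemma cyc_G n : in_Gstar (cyc n).
Proof. by rewrite /in_Gstar cyc_WM cyc_MW setUC. Qed.

Lemma worst_arith n y : 0 < n -> y < n + n ->
  ((n + y) %% (n + n) + (n + n - y) + n.-1) %% (n + n) = (n + n).-1.
Proof.
move=> n0 hy.
case: (ltnP (n + y) (n + n)) => h.
  rewrite (modn_small h).
  have -> : n + y + (n + n - y) + n.-1 = (n + n).-1 + (n + n) by lia.
  rewrite modnDr modn_small //; lia.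
have -> : (n + y) %% (n + n) = n + y - (n + n).
  have -> : n + y = (n + y - (n + n)) + (n + n) by lia.
  rewrite modnDr modn_small //; lia.
rewrite modn_small; lia.
Qed.

Theorem theorem5 (n : nat) (hn : 2 <= n) :
  ~ exists F : profile n -> {set {perm agent n}},
      [/\ mechanism F, resolute F, Gsymmetric F & minimally_optimal F].
Proof.
move=> [F [mech res sym mo]].
have n0 : 0 < n by lia.
have hp := @prof_ok n.
have := sym (prof n) (cyc n) hp (@cyc_G n); rewrite prof_inv // => E.
have [mu Fmu] := cards1P (introT eqP (res _ hp)).
have hmu : mu \in F (prof n) by rewrite Fmu set11.
have [mW mM minv] := mech _ hp mu hmu.
have : act_matching (cyc n) mu \in F (prof n) by rewrite E; apply: imset_f.
rewrite Fmu inE => /eqP hact.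
have comm : forall x, mu (cyc n x) = cyc n (mu x).
  move=> x; have := congr1 (fun s : {perm agent n} => s (cyc n x)) hact.
  by rewrite /act_matching (permM ((cyc n)^-1 * mu)%g (cyc n)) (permM (cyc n)^-1 mu) permK => ->.
have comm_it : forall k x, mu (iter k (cyc n) x) = iter k (cyc n) (mu x).
  by elim=> [|k IH] x //=; rewrite comm IH.
have N0 : 0 < n + n by lia.
pose z0 : agent n := ((Pp n)^-1)%g (Ordinal N0).
have qz0 : q z0 = 0 by rewrite /q /z0 permKV.
have iq : forall z, z = iter (q z) (cyc n) z0.
  move=> z; apply: q_inj; by rewrite q_iter qz0 add0n modn_small // q_lt.
set e := q (mu z0).
have qmu : forall z, q (mu z) = (e + q z) %% (n + n).
  by move=> z; rewrite {1}(iq z) comm_it q_iter.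
have oe : odd e.
  have : mu z0 \in Mset n by rewrite -mW; apply: imset_f; rewrite inE isW_q qz0.
  by rewrite inE isW_q negbK.
have een : e = n.
  have := qmu (mu z0); rewrite minv qz0 -/e => h.
  have he := q_lt (mu z0); rewrite -/e in he.
  case: (ltnP (e + e) (n + n)) => h2.
    move: h; rewrite modn_small // => h3; have e0 : e = 0 by lia.
    by move: oe; rewrite e0.
  move: h; have -> : e + e = (e + e - (n + n)) + (n + n) by lia.
  rewrite modnDr modn_small; lia.
have [z hz] := mo _ hp mu hmu.
have muX : mu z \in other_side z.
  rewrite /other_side; case: ifP => hw.
    by rewrite -mW; apply: imset_f; rewrite inE.
  by rewrite -mM; apply: imset_f; rewrite inE hw.
have kmu : key z (mu z) = (n + n).-1.
  by rewrite /key qmu een worst_arith // q_lt.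
move: hz; rewrite /rank.
have -> : [set b in other_side z | prof n z (b, mu z)] = other_side z.
  apply/setP => b; rewrite !inE !ffunE /=; case hb: (b \in other_side z) => //=.
  by rewrite muX kmu -ltnS prednK // key_lt.
rewrite /other_side; case: ifP => _; by rewrite ?card_W ?card_M ltnn.
Qed.
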